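(* Let $L$ be a generic length vector satisfying the strict triangle inequality. A vertex of $\Gamma(L)$ labeled $(I,J,K)$ is incident to exactly $2^{i}+2^{j}+2^{k}-6$ edges, where $i,j,k$ are the cardinalities of $I,J,K$ respectively.
   Context: Let $n\ge 4$ and $L=(l_1,\dots,l_n)$ be positive reals with $l_i<\sum_{j\ne i}l_j$ for every $i$ (strict triangle inequality), and generic: there is no $J\subseteq[n]$ with $\sum_{i\in J}l_i=\sum_{i\notin J}l_i$. Here $[n]=\{1,\dots,n\}$ and $|L|=\sum_{i=1}^n l_i$. A set $I\subseteq[n]$ is short if $\sum_{i\in I}l_i<|L|/2$ and long otherwise. A cyclically ordered partition of $[n]$ into $k$ parts is a sequence $(A_1,\dots,A_k)$ of pairwise disjoint nonempty sets with union $[n]$, considered up to cyclic shifts $(A_1,\dots,A_k)\sim(A_2,\dots,A_k,A_1)$; there is no ordering inside a part. It is admissible if every part is short. The graph $\Gamma(L)$ has as vertices the admissible cyclically ordered partitions of $[n]$ into 3 parts, written $(I,J,K)$, and as edges the admissible cyclically ordered partitions into 4 parts $(A,B,C,D)$; such an edge is incident to each of the partitions $(A\cup B,C,D)$, $(A,B\cup C,D)$, $(A,B,C\cup D)$, $(D\cup A,B,C)$ that is admissible. *)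

(* Defs.v *)
From HB Require Import structures.
From mathcomp Require Import all_boot all_order all_algebra.
Set Implicit Arguments. Unset Strict Implicit. Unset Printing Implicit Defensive.
Import Order.TTheory GRing.Theory Num.Theory.

Section Defs.
Variables (R : realFieldType) (n : nat) (L : 'I_n -> R).
Local Open Scope ring_scope.

Definition sumL (S : {set 'I_n}) : R := \sum_(i in S) L i.
Definition totL : R := sumL [set: 'I_n].

Definition positive_lengths : Prop := forall i, 0 < L i.
Definition strict_triangle : Prop :=
  forall i : 'I_n, L i < \sum_(j < n | j != i) L j.
Definition generic : Prop := forall J : {set 'I_n}, sumL J != sumL (~: J).

Definition short (S : {set 'I_n}) : bool := sumL S < totL / 2%:R.

Definition part (s : seq {set 'I_n}) (i : nat) : {set 'I_n} := nth set0 s i.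

Definition ordpart k (t : k.-tuple {set 'I_n}) : bool :=
  [&& [forall i : 'I_k, part t i != set0],
      [forall i : 'I_k, forall j : 'I_k,
         (i != j) ==> [disjoint part t i & part t j]] &
      (\bigcup_(i < k) part t i == [set: 'I_n])].

Definition admissible k (t : k.-tuple {set 'I_n}) : bool :=
  ordpart t && [forall i : 'I_k, short (part t i)].

Definition cyc k (t : k.-tuple {set 'I_n}) : {set k.-tuple {set 'I_n}} :=
  [set u : k.-tuple {set 'I_n} | [exists r : 'I_k, val u == rot r (val t)]].

(* The four 3-part partitions obtained from (A,B,C,D) by merging two
   cyclically adjacent parts. *)
Definition merges (e : 4.-tuple {set 'I_n}) : seq (3.-tuple {set 'I_n}) :=
  let A := part e 0 in let B := part e 1 in
  let C := part e 2 in let D := part e 3 in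
  [:: [tuple A :|: B; C; D]; [tuple A; B :|: C; D];
      [tuple A; B; C :|: D]; [tuple D :|: A; B; C]].

Definition incident (e : 4.-tuple {set 'I_n}) (v : 3.-tuple {set 'I_n}) : bool :=
  has (fun m => admissible m && (cyc m == cyc v)) (merges e).

(* the set of edges of Gamma(L) incident to the vertex (class of) v *)
Definition incident_edges (v : 3.-tuple {set 'I_n})
  : {set {set 4.-tuple {set 'I_n}}} :=
  [set cyc e | e in [pred e : 4.-tuple {set 'I_n} |
                          admissible e && incident e v]].

End Defs.

(* Main.v *)
Require Import Defs.
From HB Require Import structures.
From mathcomp Require Import all_boot all_order all_algebra zify.
Import Order.TTheory GRing.Theory Num.Theory.
Set Implicit Arguments. Unset Strict Implicit. Unset Printing Implicit Defensive.

Lemma rot_ord (T : Type) k (s : seq T) m : 0 < k -> size s = k -> m <= k ->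
  exists r : 'I_k, rot m s = rot r s.
Proof.
move=> k0 hs hm; case: (ltnP m k) => hmk; first by exists (Ordinal hmk).
have -> : m = k by apply/eqP; rewrite eqn_leq hm hmk.
by exists (Ordinal k0); rewrite /= rot0 -{1}hs rot_size.
Qed.

Lemma cyc_eq n k (t u : k.-tuple {set 'I_n}) : u \in cyc t -> cyc u = cyc t.
Proof.
rewrite inE => /existsP [r /eqP hr].
have k0 : 0 < k by apply: leq_ltn_trans (ltn_ord r).
apply/setP => x; rewrite !inE; apply/existsP/existsP => [[s /eqP hs]|[s /eqP hs]].
- have hle : rot_add (val t) r s <= k by have := leq_rot_add r s (val t); rewrite size_tuple.
  have [r' hr'] := @rot_ord _ k (val t) _ k0 (size_tuple t) hle.
  by exists r'; rewrite hs hr rot_rot_add hr'.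
- have ht : val t = rot (k - r) (val u).
    by have := rotK r (val t); rewrite /rotr size_tuple -hr.
  have hle : rot_add (val u) (k - r) s <= k by have := leq_rot_add (k - r) s (val u); rewrite size_tuple.
  have [r' hr'] := @rot_ord _ k (val u) _ k0 (size_tuple u) hle.
  by exists r'; rewrite hs ht rot_rot_add hr'.
Qed.

Lemma cyc_refl n k (t : k.-tuple {set 'I_n}) : 0 < k -> t \in cyc t.
Proof. by move=> k0; rewrite inE; apply/existsP; exists (Ordinal k0); rewrite rot0. Qed.

Lemma cyc_mem n k (t u : k.-tuple {set 'I_n}) : 0 < k -> cyc u = cyc t -> u \in cyc t.
Proof. by move=> k0 <-; apply: cyc_refl. Qed.

Lemma cyc_rot n k (t u : k.-tuple {set 'I_n}) (r : nat) : r < k -> val u = rot r (val t) ->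
  cyc u = cyc t.
Proof. by move=> hr hu; apply: cyc_eq; rewrite inE; apply/existsP; exists (Ordinal hr); rewrite hu. Qed.

Lemma short_sub (R : realFieldType) n (L : 'I_n -> R) (S T : {set 'I_n}) :
  positive_lengths L -> S \subset T -> short L T -> short L S.
Proof.
move=> hp hST; rewrite /short; apply: le_lt_trans.
rewrite /sumL [X in (_ <= X)%R](big_setID S) /= (setIidPr hST) lerDl.
by apply: sumr_ge0 => i _; apply: ltW.
Qed.

Definition good3 (R : realFieldType) n (L : 'I_n -> R) (X Y Z : {set 'I_n}) : Prop :=
  [/\ [/\ X != set0, Y != set0 & Z != set0],
      [/\ [disjoint X & Y], [disjoint Y & Z] & [disjoint X & Z]],
      X :|: Y :|: Z = setT & [/\ short L X, short L Y & short L Z]].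

Lemma adm3E (R : realFieldType) n (L : 'I_n -> R) (X Y Z : {set 'I_n}) :
  admissible L [tuple X; Y; Z] <-> good3 L X Y Z.
Proof.
rewrite /admissible /ordpart !big_ord_recr big_ord0 /= set0U; split.
- case/andP => /and3P [/forallP hne /forallP hd /eqP hU] /forallP hs.
  have d := fun i j h => implyP (forallP (hd i) j) h.
  split => //.
  + split; [exact: (hne (@Ordinal 3 0 isT)) | exact: (hne (@Ordinal 3 1 isT))
      | exact: (hne (@Ordinal 3 2 isT))].
  + split; [exact: (d (@Ordinal 3 0 isT) (@Ordinal 3 1 isT) isT)
      | exact: (d (@Ordinal 3 1 isT) (@Ordinal 3 2 isT) isT)
      | exact: (d (@Ordinal 3 0 isT) (@Ordinal 3 2 isT) isT)].
  + split; [exact: (hs (@Ordinal 3 0 isT)) | exact: (hs (@Ordinal 3 1 isT))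
      | exact: (hs (@Ordinal 3 2 isT))].
- case=> [[h1 h2 h3] [d1 d2 d3] hU [s1 s2 s3]].
  apply/andP; split; last by apply/forallP => -[[|[|[|i]]] hi].
  apply/and3P; split; last by rewrite hU.
  + by apply/forallP => -[[|[|[|i]]] hi].
  + apply/forallP => -[[|[|[|i]]] hi]; apply/forallP => -[[|[|[|j]]] hj] //=;
    rewrite ?(disjoint_sym Y X) ?(disjoint_sym Z X) ?(disjoint_sym Z Y) //.
Qed.

Definition good4 (R : realFieldType) n (L : 'I_n -> R) (a b c d : {set 'I_n}) : Prop :=
  [/\ [/\ a != set0, b != set0, c != set0 & d != set0],
      [/\ [disjoint a & b], [disjoint b & c], [disjoint c & d] & [disjoint d & a]],
      [disjoint a & c] /\ [disjoint b & d],
      a :|: b :|: c :|: d = setT & [/\ short L a, short L b, short L c & short L d]].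

Lemma adm4E (R : realFieldType) n (L : 'I_n -> R) (a b c d : {set 'I_n}) :
  admissible L [tuple a; b; c; d] <-> good4 L a b c d.
Proof.
rewrite /admissible /ordpart !big_ord_recr big_ord0 /= set0U; split.
- case/andP => /and3P [/forallP hne /forallP hd /eqP hU] /forallP hs.
  have dd := fun i j h => implyP (forallP (hd i) j) h.
  split => //.
  + split; [exact: (hne (@Ordinal 4 0 isT)) | exact: (hne (@Ordinal 4 1 isT))
      | exact: (hne (@Ordinal 4 2 isT)) | exact: (hne (@Ordinal 4 3 isT))].
  + split; [exact: (dd (@Ordinal 4 0 isT) (@Ordinal 4 1 isT) isT)
      | exact: (dd (@Ordinal 4 1 isT) (@Ordinal 4 2 isT) isT)
      | exact: (dd (@Ordinal 4 2 isT) (@Ordinal 4 3 isT) isT)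
      | exact: (dd (@Ordinal 4 3 isT) (@Ordinal 4 0 isT) isT)].
  + split; [exact: (dd (@Ordinal 4 0 isT) (@Ordinal 4 2 isT) isT)
      | exact: (dd (@Ordinal 4 1 isT) (@Ordinal 4 3 isT) isT)].
  + split; [exact: (hs (@Ordinal 4 0 isT)) | exact: (hs (@Ordinal 4 1 isT))
      | exact: (hs (@Ordinal 4 2 isT)) | exact: (hs (@Ordinal 4 3 isT))].
- case=> [[h1 h2 h3 h4] [d1 d2 d3 d4] [d5 d6] hU [s1 s2 s3 s4]].
  apply/andP; split; last by apply/forallP => -[[|[|[|[|i]]]] hi].
  apply/and3P; split; last by rewrite hU.
  + by apply/forallP => -[[|[|[|[|i]]]] hi].
  + apply/forallP => -[[|[|[|[|i]]]] hi]; apply/forallP => -[[|[|[|[|j]]]] hj] //=;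
    rewrite ?(disjoint_sym b a) ?(disjoint_sym c a) ?(disjoint_sym a d)
            ?(disjoint_sym c b) ?(disjoint_sym d b) ?(disjoint_sym d c) //.
Qed.

Definition E n (X Y Z A : {set 'I_n}) : 4.-tuple {set 'I_n} := [tuple A; X :\: A; Y; Z].

Lemma setDnz n (X A : {set 'I_n}) : A \proper X -> X :\: A != set0.
Proof. by move=> hp; rewrite setD_eq0 (proper_subn hp). Qed.

Lemma disjD n (X A : {set 'I_n}) : [disjoint A & X :\: A].
Proof. by rewrite -setI_eq0; apply/eqP/setP => x; rewrite !inE; case: (x \in A); rewrite ?andbF. Qed.

Lemma UD n (X A : {set 'I_n}) : A \subset X -> A :|: X :\: A = X.
Proof.
move/subsetP=> h; apply/setP => x; rewrite !inE.
by case hx: (x \in A); rewrite ?(h _ hx) /= ?andbT.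
Qed.

Lemma G1 (R : realFieldType) n (L : 'I_n -> R) (X Y Z A : {set 'I_n}) :
  positive_lengths L -> good3 L X Y Z -> A \proper X -> A != set0 ->
  admissible L (E X Y Z A) && incident L (E X Y Z A) [tuple X; Y; Z].
Proof.
move=> hp hg hA hA0; have hg' := hg.
case: hg => [[h1 h2 h3] [d1 d2 d3] hU [s1 s2 s3]].
have hsub := proper_sub hA.
apply/andP; split.
  apply/adm4E; split.
  - by split => //; apply: setDnz.
  - split; first exact: disjD.
    + exact: disjointWl (subsetDl X A) d1.
    + done.
    + by rewrite disjoint_sym; apply: disjointWl hsub d3.
  - split; first by apply: disjointWl hsub d1.
    exact: disjointWl (subsetDl X A) d3.
  - by rewrite UD.
  - split => //; [exact: short_sub hp hsub s1 | exact: short_sub hp (subsetDl X A) s1].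
rewrite /incident /merges /=; apply/orP; left.
rewrite UD //; apply/andP; split => //; exact/adm3E.
Qed.

Lemma tuple4E n (e : 4.-tuple {set 'I_n}) :
  e = [tuple part e 0; part e 1; part e 2; part e 3].
Proof. by apply: val_inj; case: e => [[|a[|b[|c[|d[|]]]]]]. Qed.

Lemma tuple3E n (e : 3.-tuple {set 'I_n}) :
  e = [tuple part e 0; part e 1; part e 2].
Proof. by apply: val_inj; case: e => [[|a[|b[|c[|]]]]]. Qed.

Definition Xp n (x0 x1 x2 : {set 'I_n}) (p : 'I_3) := nth set0 [:: x0; x1; x2] p.
Definition Yp n (x0 x1 x2 : {set 'I_n}) (p : 'I_3) := nth set0 [:: x1; x2; x0] p.
Definition Zp n (x0 x1 x2 : {set 'I_n}) (p : 'I_3) := nth set0 [:: x2; x0; x1] p.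

Lemma rot3 n (x0 x1 x2 : {set 'I_n}) (r : 'I_3) :
  rot r [:: x0; x1; x2] = [:: Xp x0 x1 x2 r; Yp x0 x1 x2 r; Zp x0 x1 x2 r].
Proof. by case: r => [[|[|[|k]]] hk]. Qed.

Lemma tri_rot n (x0 x1 x2 : {set 'I_n}) (r : 'I_3) : exists r' : 'I_3,
  [:: Yp x0 x1 x2 r; Zp x0 x1 x2 r; Xp x0 x1 x2 r] =
  [:: Xp x0 x1 x2 r'; Yp x0 x1 x2 r'; Zp x0 x1 x2 r'].
Proof.
case: r => [[|[|[|k]]] hk] //.
- by exists (@Ordinal 3 1 isT).
- by exists (@Ordinal 3 2 isT).
- by exists (@Ordinal 3 0 isT).
Qed.

Lemma core1 n (a b c d X Y Z : {set 'I_n}) :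
  a != set0 -> b != set0 -> [disjoint a & b] ->
  [:: a :|: b; c; d] = [:: X; Y; Z] ->
  ((a \proper X) && (a != set0)) /\ E X Y Z a = [tuple a; b; c; d].
Proof.
move=> ha hb dab [<- <- <-]; split.
  rewrite ha andbT properE subsetUl /=; apply/negP => hs.
  case/set0Pn: hb => y hy.
  have : y \in a by apply: (subsetP hs); rewrite inE hy orbT.
  move: dab; rewrite -setI_eq0 => /eqP /setP /(_ y).
  by rewrite !inE hy andbT => ->.
apply: val_inj => /=; congr (_ :: _ :: _).
apply/setP => x; rewrite !inE; move: dab; rewrite -setI_eq0 => /eqP /setP /(_ x).
by rewrite !inE; case: (x \in a); case: (x \in b).
Qed.

Lemma G2 (R : realFieldType) n (L : 'I_n -> R) (x0 x1 x2 : {set 'I_n}) (e : 4.-tuple {set 'I_n}) :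
  admissible L e -> incident L e [tuple x0; x1; x2] ->
  exists p : 'I_3, exists A : {set 'I_n},
    ((A \proper Xp x0 x1 x2 p) && (A != set0)) /\
    cyc e = cyc (E (Xp x0 x1 x2 p) (Yp x0 x1 x2 p) (Zp x0 x1 x2 p) A).
Proof.
rewrite (tuple4E e); set a := part e 0; set b := part e 1; set c := part e 2; set d := part e 3.
move=> /adm4E [[ha hb hc hd] [dab dbc dcd dda] _ _ _].
rewrite /incident /merges /= orbF.
case/or4P => /andP [_ /eqP hm]; have := cyc_mem (isT : 0 < 3) hm;
  rewrite inE => /existsP [r /eqP /= hr]; rewrite rot3 in hr.
- have [h1 h2] := core1 ha hb dab hr.
  by exists r, a; rewrite h2.
- have hr' : [:: b :|: c; d; a] = [:: Yp x0 x1 x2 r; Zp x0 x1 x2 r; Xp x0 x1 x2 r].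
    by case: hr => -> -> ->.
  have [r' hr''] := tri_rot x0 x1 x2 r; rewrite hr'' in hr'.
  have [h1 h2] := core1 hb hc dbc hr'.
  exists r', b; rewrite h2; split => //; symmetry; exact: (@cyc_rot _ _ _ _ 1).
- have hr' : [:: c :|: d; a; b] = [:: Zp x0 x1 x2 r; Xp x0 x1 x2 r; Yp x0 x1 x2 r].
    by case: hr => -> -> ->.
  have [r' hr''] := tri_rot x0 x1 x2 r.
  have [r2 hr2] := tri_rot x0 x1 x2 r'.
  have e1 : [:: Zp x0 x1 x2 r; Xp x0 x1 x2 r; Yp x0 x1 x2 r] =
            [:: Xp x0 x1 x2 r2; Yp x0 x1 x2 r2; Zp x0 x1 x2 r2].
    by rewrite -hr2; case: hr'' => -> -> ->.
  rewrite e1 in hr'.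
  have [h1 h2] := core1 hc hd dcd hr'.
  exists r2, c; rewrite h2; split => //; symmetry; exact: (@cyc_rot _ _ _ _ 2).
- have [h1 h2] := core1 hd ha dda hr.
  exists r, d; rewrite h2; split => //; symmetry; exact: (@cyc_rot _ _ _ _ 3).
Qed.

Lemma neq_disj n (X Y : {set 'I_n}) : X != set0 -> [disjoint X & Y] -> X != Y.
Proof. by move=> hX hd; apply: contraNneq hX => hXY; move: hd; rewrite -setI_eq0 hXY setIid. Qed.

Lemma notx n (X Y A : {set 'I_n}) : A \proper X -> A != set0 -> [disjoint X & Y] -> A != Y.
Proof. by move=> hp h0 hd; apply: neq_disj h0 (disjointWl (proper_sub hp) hd). Qed.

Lemma notself n (X A : {set 'I_n}) : A \proper X -> A != X.
Proof. by move=> hp; apply: contraTneq hp => ->; rewrite properE subxx. Qed.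

Lemma properD n (X A : {set 'I_n}) : A \proper X -> A != set0 -> X :\: A \proper X.
Proof.
move=> hp h0; rewrite properE subsetDl /=; apply/negP => hs.
case/set0Pn: h0 => y hy.
have := subsetP hs y (subsetP (proper_sub hp) y hy).
by rewrite inE hy.
Qed.

Lemma notx3 (R : realFieldType) n (L : 'I_n -> R) (x0 x1 x2 A : {set 'I_n}) (p : 'I_3) :
  good3 L x0 x1 x2 -> A \proper Xp x0 x1 x2 p -> A != set0 ->
  [&& A != x0, A != x1 & A != x2].
Proof.
move=> [_ [d01 d12 d02] _ _] hp h0.
have d10 : [disjoint x1 & x0] by rewrite disjoint_sym.
have d21 : [disjoint x2 & x1] by rewrite disjoint_sym.
have d20 : [disjoint x2 & x0] by rewrite disjoint_sym.
case: p hp => [[|[|[|p]]] hp] //= hA; rewrite ?(notself hA) /=.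
- by rewrite (notx hA h0 d01) (notx hA h0 d02).
- by rewrite (notx hA h0 d12) (notx hA h0 d10).
- by rewrite (notx hA h0 d20) (notx hA h0 d21).
Qed.

Ltac kill := match goal with
 | H : ?S = ?T, H' : is_true (?S != ?T) |- _ => by rewrite H eqxx in H'
 | H : ?S = ?T, H' : is_true (?T != ?S) |- _ => by rewrite H eqxx in H'
 end.

Lemma G3 (R : realFieldType) n (L : 'I_n -> R) (x0 x1 x2 A B : {set 'I_n}) (p q : 'I_3) :
  good3 L x0 x1 x2 -> A \proper Xp x0 x1 x2 p -> A != set0 ->
  cyc (E (Xp x0 x1 x2 p) (Yp x0 x1 x2 p) (Zp x0 x1 x2 p) A) =
  cyc (E (Xp x0 x1 x2 q) (Yp x0 x1 x2 q) (Zp x0 x1 x2 q) B) -> p = q /\ A = B.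
Proof.
move=> hg hA hA0 hc.
have [[h0 h1 h2] [d01 d12 d02] _ _] := hg.
have n01 := neq_disj h0 d01; have n12 := neq_disj h1 d12; have n02 := neq_disj h0 d02.
move: (notx3 hg hA hA0) => /and3P [m0 m1 m2].
move: (notx3 hg (properD hA hA0) (setDnz hA)).
have := cyc_mem (isT : 0 < 4) hc; rewrite inE => /existsP [r /eqP].
clear hc hg; rewrite /Xp /Yp /Zp.
case: p hA => [[|[|[|p]]] hp] //= _;
case: q => [[|[|[|q]]] hq] //=;
case: r => [[|[|[|[|r]]]] hr] //= he /and3P [k0 k1 k2]; injection he; intros;
first [kill | (split; [by apply: val_inj | by []])].
Qed.

Lemma good3_rot (R : realFieldType) n (L : 'I_n -> R) (X Y Z : {set 'I_n}) :
  good3 L X Y Z -> good3 L Y Z X.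
Proof.
case=> [[h1 h2 h3] [d1 d2 d3] hU [s1 s2 s3]]; split => //.
- by split; rewrite // disjoint_sym.
- by rewrite setUC setUA.
Qed.

Lemma good3_p (R : realFieldType) n (L : 'I_n -> R) (x0 x1 x2 : {set 'I_n}) (p : 'I_3) :
  good3 L x0 x1 x2 -> good3 L (Xp x0 x1 x2 p) (Yp x0 x1 x2 p) (Zp x0 x1 x2 p).
Proof.
move=> hg; have hg1 := good3_rot hg; have hg2 := good3_rot hg1.
by case: p => [[|[|[|p]]] hp].
Qed.

Lemma cnt n (X : {set 'I_n}) : X != set0 ->
  #|[set A : {set 'I_n} | (A \proper X) && (A != set0)]| = (2 ^ #|X| - 2)%N.
Proof.
move=> hX.
rewrite -card_powerset [#|powerset X|](cardsD1 X) [#|powerset X :\ X|](cardsD1 set0) !inE.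
rewrite subxx sub0set eq_sym hX /= add1n add1n subn2 /=.
apply: eq_card => A; rewrite !inE properEneq.
by case: (A != set0); case: (A != X); rewrite ?andbF ?andbT.
Qed.

Lemma arith (a b c : nat) : 2 <= a -> 2 <= b -> 2 <= c ->
  (0 + (a - 2) + (b - 2) + (c - 2) = a + b + c - 6)%N.
Proof. lia. Qed.

Lemma main_gen (R : realFieldType) n (L : 'I_n -> R) (x0 x1 x2 : {set 'I_n}) :
  positive_lengths L -> good3 L x0 x1 x2 ->
  #|incident_edges L [tuple x0; x1; x2]| =
    (2 ^ #|x0| + 2 ^ #|x1| + 2 ^ #|x2| - 6)%N.
Proof.
move=> hp hg.
pose D := [set pA : 'I_3 * {set 'I_n} | (pA.2 \proper Xp x0 x1 x2 pA.1) && (pA.2 != set0)].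
pose f := fun pA : 'I_3 * {set 'I_n} =>
  cyc (E (Xp x0 x1 x2 pA.1) (Yp x0 x1 x2 pA.1) (Zp x0 x1 x2 pA.1) pA.2).
have -> : incident_edges L [tuple x0; x1; x2] = f @: D.
  apply/setP => S; apply/imsetP/imsetP.
  - case=> e; rewrite inE => /andP [ha hi] ->.
    have [p [A [hA hc]]] := G2 ha hi.
    by exists (p, A); rewrite ?inE.
  - case=> [[p A]]; rewrite inE /= => /andP [hA hA0] ->.
    exists (E (Xp x0 x1 x2 p) (Yp x0 x1 x2 p) (Zp x0 x1 x2 p) A) => //.
    have /andP [h1 h2] := G1 hp (good3_p p hg) hA hA0.
    have hcy : cyc [tuple Xp x0 x1 x2 p; Yp x0 x1 x2 p; Zp x0 x1 x2 p] =
               cyc [tuple x0; x1; x2].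
      by apply: (@cyc_rot _ _ _ _ p) => //=; rewrite rot3.
    by rewrite inE h1 /=; move: h2; rewrite /incident hcy.
rewrite card_in_imset; last first.
  move=> [p A] [q B]; rewrite !inE /= => /andP [hA hA0] _ hc.
  by have [-> ->] := G3 hg hA hA0 hc.
have [[h0 h1 h2] _ _ _] := hg.
rewrite -sum1_card.
rewrite (eq_bigl (fun pA : 'I_3 * {set 'I_n} => predT pA.1 &&
   ((pA.2 \proper Xp x0 x1 x2 pA.1) && (pA.2 != set0)))); last by move=> pA; rewrite inE.
rewrite -(pair_big_dep predT (fun (p : 'I_3) (A : {set 'I_n}) => (A \proper Xp x0 x1 x2 p) && (A != set0)) (fun _ _ => 1%N)) /=.
rewrite (eq_bigr (fun p : 'I_3 => 2 ^ #|Xp x0 x1 x2 p| - 2)%N); last first.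
  move=> p _; rewrite sum1_card -cnt; first by apply: eq_card => A; rewrite inE.
  by case: p => [[|[|[|p]]] hp'].
rewrite !big_ord_recr big_ord0 /= /Xp /=.
have e0 : 2 <= 2 ^ #|x0| by rewrite -{1}(expn1 2) leq_exp2l // card_gt0.
have e1 : 2 <= 2 ^ #|x1| by rewrite -{1}(expn1 2) leq_exp2l // card_gt0.
have e2 : 2 <= 2 ^ #|x2| by rewrite -{1}(expn1 2) leq_exp2l // card_gt0.
by apply: arith.
Qed.

Theorem mainTheorem3 (R : realFieldType) (n : nat) (L : 'I_n -> R)
  (hn : 4 <= n)
  (hpos : positive_lengths L) (htri : strict_triangle L) (hgen : generic L)
  (v : 3.-tuple {set 'I_n}) (hv : admissible L v) :
  #|incident_edges L v| =
    (2 ^ #|part v 0| + 2 ^ #|part v 1| + 2 ^ #|part v 2| - 6)%N.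
Proof.
have hvE := tuple3E v.
rewrite {1}hvE; apply: main_gen => //.
by apply/adm3E; rewrite -hvE.
Qed.
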